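(* Let $X,X'$ be i.i.d. random vectors in $\mathbb{R}^m$ and $Y,Y'$ i.i.d. random vectors in $\mathbb{R}^n$ (with $X,Y$ defined on a common probability space). Let $\mu,\nu$ be symmetric Lévy measures on $\mathbb{R}^m\setminus\{0\}$ and $\mathbb{R}^n\setminus\{0\}$ with full support and $\Phi(x)=\int(1-\cos\langle x,s\rangle)\mu(ds)$, $\Psi(y)=\int(1-\cos\langle y,t\rangle)\nu(dt)$. Then $$V^2(X,Y)\le\mathbb{E}\Phi(X-X')\cdot\mathbb{E}\Psi(Y-Y')\le16\,\mathbb{E}\Phi(X)\cdot\mathbb{E}\Psi(Y).$$
   Context: Symmetric Lévy measure on $\mathbb{R}^d\setminus\{0\}$: $\rho(B)=\rho(-B)$ and $\int(1\wedge|r|^2)\rho(dr)<\infty$; full support: positive mass on every nonempty open subset. $V^2(X,Y)=\iint|f_{(X,Y)}(s,t)-f_X(s)f_Y(t)|^2\,\mu(ds)\,\nu(dt)$, $f$ denoting characteristic functions. *)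

(* Defs.v *)
From HB Require Import structures.
From mathcomp Require Import all_boot all_order all_algebra.
From mathcomp Require Import all_classical all_reals all_analysis.
Set Implicit Arguments. Unset Strict Implicit. Unset Printing Implicit Defensive.
Import Order.TTheory GRing.Theory Num.Theory.
Local Open Scope classical_set_scope.
Local Open Scope ring_scope.

(* R^d is represented by d.-tuple R, equipped with the library's product
   sigma-algebra (generated by the coordinates), i.e. the Borel sets of R^d. *)
Section vectors.
Variables (R : realType) (d : nat).
Definition vzero : d.-tuple R := [tuple (0 : R) | i < d].
Definition vsub (x y : d.-tuple R) : d.-tuple R := [tuple tnth x i - tnth y i | i < d].
Definition vopp (x : d.-tuple R) : d.-tuple R := [tuple - tnth x i | i < d].
Definition vdot (x y : d.-tuple R) : R := \sum_(i < d) tnth x i * tnth y i.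
Definition vnorm2 (x : d.-tuple R) : R := \sum_(i < d) tnth x i ^+ 2.
Definition eopen (U : set (d.-tuple R)) : Prop :=
  forall x, U x -> exists2 e : R, 0 < e & forall y, vnorm2 (vsub y x) < e ^+ 2 -> U y.
End vectors.

Local Open Scope ereal_scope.

(* A symmetric Levy measure on R^d \ {0} with full support, viewed as a measure
   on R^d without mass at the origin. *)
Definition sym_levy_full (R : realType) (d : nat)
  (mu : {measure set (d.-tuple R) -> \bar R}) : Prop :=
  [/\ mu [set vzero R d] = 0,
      (forall B, measurable B -> mu B = mu (@vopp R d @` B)),
      \int[mu]_r (Num.min 1 (vnorm2 r))%:E < +oo &
      (forall U, eopen U -> U `<=` ~` [set vzero R d] -> U !=set0 -> 0 < mu U)].

Definition levy_phi (R : realType) (d : nat)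
  (mu : {measure set (d.-tuple R) -> \bar R}) (x : d.-tuple R) : \bar R :=
  \int[mu]_s (1 - cos (vdot x s))%:E.

Section rv.
Variables (dO : measure_display) (O : measurableType dO) (R : realType)
  (P : probability O R).

Definition indep2 (m n : nat) (X : O -> m.-tuple R) (Z : O -> n.-tuple R) : Prop :=
  forall A B, measurable A -> measurable B ->
    P (X @^-1` A `&` Z @^-1` B) = P (X @^-1` A) * P (Z @^-1` B).

Definition same_law (m : nat) (X Z : O -> m.-tuple R) : Prop :=
  forall A, measurable A -> P (X @^-1` A) = P (Z @^-1` A).

Definition cf_re (m : nat) (X : O -> m.-tuple R) (s : m.-tuple R) : R :=
  Rintegral P setT (fun w => cos (vdot s (X w))).
Definition cf_im (m : nat) (X : O -> m.-tuple R) (s : m.-tuple R) : R :=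
  Rintegral P setT (fun w => sin (vdot s (X w))).
Definition jcf_re (m n : nat) (X : O -> m.-tuple R) (Y : O -> n.-tuple R)
  (s : m.-tuple R) (t : n.-tuple R) : R :=
  Rintegral P setT (fun w => cos (vdot s (X w) + vdot t (Y w))).
Definition jcf_im (m n : nat) (X : O -> m.-tuple R) (Y : O -> n.-tuple R)
  (s : m.-tuple R) (t : n.-tuple R) : R :=
  Rintegral P setT (fun w => sin (vdot s (X w) + vdot t (Y w))).

(* |f_{(X,Y)}(s,t) - f_X(s) f_Y(t)|^2, written with real/imaginary parts *)
Definition cf_gap2 (m n : nat) (X : O -> m.-tuple R) (Y : O -> n.-tuple R)
  (s : m.-tuple R) (t : n.-tuple R) : R :=
  let a := cf_re X s in let b := cf_im X s in
  let c := cf_re Y t in let e := cf_im Y t in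
  ((jcf_re X Y s t - (a * c - b * e)) ^+ 2 + (jcf_im X Y s t - (a * e + b * c)) ^+ 2)%R.

Definition dcov2 (m n : nat) (mu : {measure set (m.-tuple R) -> \bar R})
  (nu : {measure set (n.-tuple R) -> \bar R})
  (X : O -> m.-tuple R) (Y : O -> n.-tuple R) : \bar R :=
  \int[mu]_s \int[nu]_t (cf_gap2 X Y s t)%:E.
End rv.

(* Main.v *)
Require Import Defs.
From HB Require Import structures.
From mathcomp Require Import all_boot all_order all_algebra.
From mathcomp Require Import all_classical all_reals all_analysis.
From mathcomp Require Import measurable_realfun ring lra.
Import Order.TTheory GRing.Theory Num.Theory.
Set Implicit Arguments. Unset Strict Implicit. Unset Printing Implicit Defensive.
Local Open Scope classical_set_scope.
Local Open Scope ring_scope.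
Section vec.
Variables (R : realType) (d : nat).
Implicit Types x y s : d.-tuple R.

Lemma vdotC x y : vdot x y = vdot y x.
Proof. by apply: eq_bigr => i _; rewrite mulrC. Qed.

Lemma vdot_subl x y s : vdot (vsub x y) s = vdot x s - vdot y s.
Proof.
rewrite /vdot -sumrB; apply: eq_bigr => i _.
by rewrite tnth_mktuple mulrBl.
Qed.

Lemma vnorm2_ge0 x : 0 <= vnorm2 x.
Proof. by apply: sumr_ge0 => i _; exact: sqr_ge0. Qed.

Lemma vnorm2_eq0 x : vnorm2 x = 0 -> x = vzero R d.
Proof.
move=> /eqP; rewrite psumr_eq0; last by move=> i _; exact: sqr_ge0.
move=> /allP H; apply: eq_from_tnth => i.
have := H i (mem_index_enum i); rewrite /= sqrf_eq0 => /eqP ->.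
by rewrite tnth_mktuple.
Qed.

Lemma measurable_vdot dA (A : measurableType dA) (f g : A -> d.-tuple R) :
  measurable_fun setT f -> measurable_fun setT g ->
  measurable_fun setT (fun a => vdot (f a) (g a)).
Proof.
move=> mf mg; apply: measurable_sum => i.
apply: measurable_funM.
  exact: (measurableT_comp (measurable_tnth i) mf).
exact: (measurableT_comp (measurable_tnth i) mg).
Qed.

Lemma measurable_vnorm2 : measurable_fun setT (@vnorm2 R d).
Proof.
apply: measurable_sum => i; apply: measurable_funX.
exact: measurable_tnth.
Qed.
End vec.

Section sigfin.
Local Open Scope ereal_scope.
Variables (R : realType) (d : nat).

Lemma levy_sigma_finite (mu : {measure set (d.-tuple R) -> \bar R}) :
  sym_levy_full mu -> sigma_finite setT mu.
Proof.
case=> mu0 _ Ifin _.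
pose c (k : nat) : R := ((k.+1)%:R)^-1%R.
have c_gt0 k : (0 < c k)%R by rewrite invr_gt0.
have c_le1 k : (c k <= 1)%R by rewrite invf_le1 // ler1n.
pose A k := (@vnorm2 R d) @^-1` [set x | (c k < x)%R].
pose B := (@vnorm2 R d) @^-1` [set 0%R].
have mA k : measurable (A k).
  rewrite -[A k]setTI; apply: measurable_vnorm2 => //.
  rewrite (_ : [set x | _] = `]c k, +oo[%classic); first exact: measurable_itv.
  by apply/seteqP; split => x /=; rewrite in_itv /= andbT.
have mB : measurable B.
  by rewrite -[B]setTI; apply: measurable_vnorm2 => //; exact: measurable_set1.
have B0 : mu B = 0.
  rewrite (_ : B = [set vzero R d]) //; apply/seteqP; split => x /=.
    by move/vnorm2_eq0.
  move=> -> /=; rewrite /vnorm2; apply: big1 => i _; rewrite tnth_mktuple.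
  by rewrite expr0n.
exists (fun k => A k `|` B).
  apply/seteqP; split => [r _|//].
  have [r0|r0] := eqVneq (vnorm2 r) 0%R.
    by exists 0%N => //; right.
  have rpos : (0 < vnorm2 r)%R by rewrite lt_neqAle eq_sym r0 vnorm2_ge0.
  exists (Num.trunc ((vnorm2 r)^-1)) => //; left; rewrite /A /c /=.
  rewrite invf_plt ?posrE //; first exact: truncnS_gt.
move=> k; split; first exact: measurableU.
have B0' : mu B < +oo by rewrite B0.
apply: (le_lt_trans (measureU2 mu (mA k) mB)); apply: lte_add_pinfty; last exact: B0'.
have H : (c k)%:E * mu (A k) <= \int[mu]_r (Num.min 1 (vnorm2 r))%:E.
  rewrite -(setIT (A k)) -integral_indic // -ge0_integralZl_EFin //.
  all: try (by move=> x _; rewrite lee_fin).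
  all: try exact/measurable_EFinP/measurable_indic.
  all: try (exact: ltW).
  apply: ge0_le_integral => //.
  - by move=> x _; rewrite mule_ge0 // lee_fin // ltW.
  - by apply: measurable_funeM; exact/measurable_EFinP/measurable_indic.
  - apply/measurable_EFinP; apply: (measurable_minr (f := cst 1%R)) => //.
    exact: measurable_vnorm2.
  - move=> x _; rewrite -EFinM lee_fin indicE.
    case: (boolP (x \in A k)) => [/set_mem xA|_].
      by rewrite mulr1 le_min c_le1 ltW.
    by rewrite mulr0 le_min ler01 vnorm2_ge0.
have key (z : \bar R) : (c k)%:E * z <= \int[mu]_r (Num.min 1 (vnorm2 r))%:E ->
    z < +oo.
  case: z => [r _| |] //; first exact: ltry.
  rewrite muleC gt0_mulye ?lte_fin // => /le_lt_trans/(_ Ifin).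
  by rewrite ltxx.
exact: key H.
Qed.
End sigfin.
Section Ebm.
Variables (dO : measure_display) (O : measurableType dO) (R : realType)
  (P : probability O R).

Definition bmf (f : O -> R) :=
  measurable_fun setT f /\ exists M : R, forall w, `|f w| <= M.

Local Notation E f := (Rintegral P setT f).

Lemma bmf_int f : bmf f -> P.-integrable setT (EFin \o f).
Proof.
case=> mf [M HM]; apply: measurable_bounded_integrable => //.
  by apply: (@le_lt_trans _ _ 1%E); [exact: probability_le1|exact: ltry].
exists M; split; first exact: num_real.
by move=> y My x _; apply: le_trans (HM x) (ltW My).
Qed.

Lemma bmf_cst k : bmf (fun _ => k).
Proof. by split; [exact: measurable_cst | exists `|k|]. Qed.

Lemma bmfD f g : bmf f -> bmf g -> bmf (fun w => f w + g w).
Proof.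
case=> mf [M HM] [mg [N HN]]; split; first exact: measurable_funD.
by exists (M + N) => w; apply: le_trans (ler_normD _ _) (lerD (HM w) (HN w)).
Qed.

Lemma bmfN f : bmf f -> bmf (fun w => - f w).
Proof.
case=> mf [M HM]; split; first exact: measurable_funN.
by exists M => w; rewrite normrN.
Qed.

Lemma bmfB f g : bmf f -> bmf g -> bmf (fun w => f w - g w).
Proof. by move=> bf bg; apply: bmfD => //; exact: bmfN. Qed.

Lemma bmfM f g : bmf f -> bmf g -> bmf (fun w => f w * g w).
Proof.
case=> mf [M HM] [mg [N HN]]; split; first exact: measurable_funM.
exists (M * N) => w; rewrite normrM; apply: ler_pM => //.
Qed.

Lemma bmf_cos h : measurable_fun setT h -> bmf (fun w => cos (h w)).
Proof.
move=> mh; split.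
  exact: (measurableT_comp (continuous_measurable_fun (@continuous_cos R)) mh).
by exists 1 => w; rewrite ler_norml cos_le1 cos_geN1.
Qed.

Lemma bmf_sin h : measurable_fun setT h -> bmf (fun w => sin (h w)).
Proof.
move=> mh; split.
  exact: (measurableT_comp (continuous_measurable_fun (@continuous_sin R)) mh).
by exists 1 => w; rewrite ler_norml sin_le1 sin_geN1.
Qed.

Lemma ED f g : bmf f -> bmf g -> E (fun w => f w + g w) = E f + E g.
Proof. by move=> bf bg; rewrite RintegralD //; exact: bmf_int. Qed.

Lemma EB f g : bmf f -> bmf g -> E (fun w => f w - g w) = E f - E g.
Proof. by move=> bf bg; rewrite RintegralB //; exact: bmf_int. Qed.

Lemma EZ k f : bmf f -> E (fun w => k * f w) = k * E f.
Proof. by move=> bf; rewrite RintegralZl //; exact: bmf_int. Qed.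

Lemma Ecst k : E (fun _ => k) = k.
Proof.
rewrite Rintegral_cst //; transitivity (k * fine (1%E : \bar R)); last by rewrite mulr1.
by congr (_ * fine _); exact: probability_setT.
Qed.

Lemma Ele f g : bmf f -> bmf g -> (forall w, f w <= g w) -> E f <= E g.
Proof. by move=> bf bg fg; apply: le_Rintegral => //; exact: bmf_int. Qed.

Lemma E_EFin f : bmf f -> (\int[P]_w (f w)%:E)%E = (E f)%:E.
Proof.
move=> bf; rewrite /Rintegral fineK //.
exact: (integrable_fin_num _ (bmf_int bf)).
Qed.

(* Cauchy-Schwarz for complex products, written in real coordinates *)
Lemma CS2 u1 u2 v1 v2 : bmf u1 -> bmf u2 -> bmf v1 -> bmf v2 ->
  (E (fun w => u1 w * v1 w - u2 w * v2 w)) ^+ 2 +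
  (E (fun w => u1 w * v2 w + u2 w * v1 w)) ^+ 2 <=
  E (fun w => u1 w ^+ 2 + u2 w ^+ 2) * E (fun w => v1 w ^+ 2 + v2 w ^+ 2).
Proof.
move=> b1 b2 b3 b4.
set a := E (fun w => u1 w * v1 w - u2 w * v2 w).
set b := E (fun w => u1 w * v2 w + u2 w * v1 w).
set A := E (fun w => u1 w ^+ 2 + u2 w ^+ 2).
set B := E (fun w => v1 w ^+ 2 + v2 w ^+ 2).
have bW1 : bmf (fun w => u1 w * v1 w - u2 w * v2 w) by apply: bmfB; apply: bmfM.
have bW2 : bmf (fun w => u1 w * v2 w + u2 w * v1 w) by apply: bmfD; apply: bmfM.
have bU : bmf (fun w => u1 w ^+ 2 + u2 w ^+ 2) by apply: bmfD; apply: bmfM.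
have bV : bmf (fun w => v1 w ^+ 2 + v2 w ^+ 2) by apply: bmfD; apply: bmfM.
have A0 : 0 <= A by apply: Rintegral_ge0 => w _; rewrite addr_ge0 // sqr_ge0.
have B0 : 0 <= B by apply: Rintegral_ge0 => w _; rewrite addr_ge0 // sqr_ge0.
set c := a ^+ 2 + b ^+ 2.
have c0 : 0 <= c by rewrite addr_ge0 // sqr_ge0.
have key k : 0 < k -> 2 * k * c <= c * A + k ^+ 2 * B.
  move=> k0.
  have -> : 2 * k * c = E (fun w => (2 * k * a) * (u1 w * v1 w - u2 w * v2 w)
                              + (2 * k * b) * (u1 w * v2 w + u2 w * v1 w)).
    rewrite ED; [|exact: bmfM (bmf_cst _) bW1|exact: bmfM (bmf_cst _) bW2].
    by rewrite !EZ // -/a -/b /c; ring.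
  have -> : c * A + k ^+ 2 * B = E (fun w => c * (u1 w ^+ 2 + u2 w ^+ 2)
                              + k ^+ 2 * (v1 w ^+ 2 + v2 w ^+ 2)).
    rewrite ED; [|exact: bmfM (bmf_cst _) bU|exact: bmfM (bmf_cst _) bV].
    by rewrite !EZ.
  apply: Ele.
  - by apply: bmfD; apply: bmfM (bmf_cst _) _.
  - by apply: bmfD; apply: bmfM (bmf_cst _) _.
  move=> w.
  set z1 := a * u1 w + b * u2 w; set z2 := a * u2 w - b * u1 w.
  have : 0 <= (z1 - k * v1 w) ^+ 2 + (z2 + k * v2 w) ^+ 2.
    by rewrite addr_ge0 // sqr_ge0.
  rewrite /z1 /z2 /c; move=> H.
  rewrite -subr_ge0; apply: le_trans H _; rewrite le_eqVlt; apply/orP; left.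
  apply/eqP; ring.
have [A0'|Apos] := eqVneq A 0.
  rewrite A0' mul0r.
  have [B0'|Bpos] := eqVneq B 0.
    have := key 1 ltr01; rewrite A0' B0' => H; lra.
  have Bp : 0 < B by rewrite lt_neqAle eq_sym Bpos B0.
  have [cz|cpos] := eqVneq c 0; first by rewrite cz.
  have cp : 0 < c by rewrite lt_neqAle eq_sym cpos c0.
  have kp : 0 < c / B by rewrite divr_gt0.
  have := key (c / B) kp; rewrite A0'.
  have -> : (c / B) ^+ 2 * B = c * (c / B).
    by rewrite expr2 -mulrA divfK ?gt_eqF // mulrC.
  have kc : 0 < c / B * c by rewrite mulr_gt0.
  move=> H; exfalso; lra.
have Ap : 0 < A by rewrite lt_neqAle eq_sym Apos A0.
have := key A Ap; move=> H.
have H2 : A * c <= A * (A * B).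
  have -> : A * (A * B) = A ^+ 2 * B by ring.
  have -> : A * c = c * A by rewrite mulrC.
  lra.
by rewrite -(ler_pM2l Ap).
Qed.

End Ebm.
Lemma bm_integrable d (T : measurableType d) (R : realType)
  (mu : {measure set T -> \bar R}) (f : T -> R) :
  (mu setT < +oo)%E -> measurable_fun setT f ->
  (exists M : R, forall x, `|f x| <= M) -> mu.-integrable setT (EFin \o f).
Proof.
move=> muT mf [M HM]; apply: measurable_bounded_integrable => //.
exists M; split; first exact: num_real.
by move=> y My x _; apply: le_trans (HM x) (ltW My).
Qed.

Section indep.
Variables (dO : measure_display) (O : measurableType dO) (R : realType)
  (P : probability O R) (m : nat) (X X' : O -> m.-tuple R)
  (mX : measurable_fun setT X) (mX' : measurable_fun setT X')
  (iX : indep2 P X X') (lX : same_law P X X').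

Let T := m.-tuple R.
Let XX' := fun w => (X w, X' w).
Let mXX' : measurable_fun setT XX'. Proof. exact: measurable_fun_pair. Qed.

HB.instance Definition _ := @isMeasurableFun.Build _ _ _ _ X mX.
HB.instance Definition _ := @isMeasurableFun.Build _ _ _ _ X' mX'.
HB.instance Definition _ := @isMeasurableFun.Build _ _ _ _ XX' mXX'.

Let PT : (P setT < +oo)%E.
Proof. by apply: (@le_lt_trans _ _ 1%E); [exact: probability_le1|exact: ltry]. Qed.

Lemma law_eq_ge0 (f : T -> \bar R) : measurable_fun setT f -> (forall x, 0 <= f x)%E ->
  (\int[P]_w f (X' w) = \int[P]_w f (X w))%E.
Proof.
move=> mf f0.
rewrite -(ge0_integral_distribution X' mf f0) -(ge0_integral_distribution X mf f0).
by apply: eq_measure_integral => A mA _; symmetry; exact: lX.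
Qed.

Lemma law_eq (f : T -> R) : measurable_fun setT f ->
  (exists M : R, forall x, `|f x| <= M) ->
  (\int[P]_w (f (X' w))%:E = \int[P]_w (f (X w))%:E)%E.
Proof.
move=> mf bf.
have mEf : measurable_fun setT (EFin \o f) by exact/measurable_EFinP.
have bX : forall Z : {mfun O >-> T}, P.-integrable setT ((EFin \o f) \o Z).
  move=> Z; apply: (bm_integrable PT) => //.
    exact: measurableT_comp.
  by case: bf => M HM; exists M => x; exact: HM.
rewrite -(integral_distribution mEf (bX [the {mfun O >-> T} of X'])).
rewrite -(integral_distribution mEf (bX [the {mfun O >-> T} of X])).
by apply: eq_measure_integral => A mA _; symmetry; exact: lX.
Qed.

Lemma indep_mul (f g : T -> R) : measurable_fun setT f -> measurable_fun setT g ->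
  (exists M : R, forall x, `|f x| <= M) -> (exists M : R, forall x, `|g x| <= M) ->
  (\int[P]_w (f (X w) * g (X' w))%:E =
   \int[P]_w (f (X w))%:E * \int[P]_w (g (X' w))%:E)%E.
Proof.
move=> mf mg [M HM] [N HN].
pose LX := distribution P X; pose LX' := distribution P X'.
pose Q := distribution P XX'.
have QE A : measurable A -> (LX \x LX')%E A = Q A.
  apply: product_measure_unique => A1 B1 mA1 mB1.
  exact: iX.
pose h := fun p : T * T => (f p.1 * g p.2)%:E.
have mh : measurable_fun setT h.
  apply/measurable_EFinP; apply: measurable_funM.
    exact: measurableT_comp mf measurable_fst.
  exact: measurableT_comp mg measurable_snd.
have bh : exists M : R, forall x, `|f x.1 * g x.2| <= M.
  by exists (M * N) => x; rewrite normrM; apply: ler_pM.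
have hint : P.-integrable setT (h \o XX').
  apply: (bm_integrable PT (f := fun w => f (X w) * g (X' w))).
    apply: measurable_funM; exact: measurableT_comp.
  by exists (M * N) => x; rewrite normrM; apply: ler_pM.
have -> : (\int[P]_w (f (X w) * g (X' w))%:E = \int[Q]_p h p)%E.
  by rewrite (integral_distribution mh hint).
have LT : ((LX \x LX')%E setT < +oo)%E.
  rewrite QE //; try (apply: (@le_lt_trans _ _ 1%E); [exact: probability_le1|exact: ltry]).
have -> : (\int[Q]_p h p = \int[LX \x LX']_p h p)%E.
  by apply: eq_measure_integral => A mA _; symmetry; exact: QE.
have hint2 : (LX \x LX')%E.-integrable setT h.
  apply: (bm_integrable LT (f := fun p : T * T => f p.1 * g p.2)) => //.
  apply: measurable_funM.
    exact: measurableT_comp mf measurable_fst.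
  exact: measurableT_comp mg measurable_snd.
rewrite -(integral12_prod_meas1 hint2).
have LX'T : (LX' setT < +oo)%E.
  by apply: (@le_lt_trans _ _ 1%E); [exact: probability_le1|exact: ltry].
have LXT : (LX setT < +oo)%E.
  by apply: (@le_lt_trans _ _ 1%E); [exact: probability_le1|exact: ltry].
have gint : LX'.-integrable setT (EFin \o g).
  by apply: (bm_integrable LX'T) => //; exists N.
have fint : LX.-integrable setT (EFin \o f).
  by apply: (bm_integrable LXT) => //; exists M.
have inner x : fubini_F LX' h x = ((f x)%:E * \int[LX']_y (g y)%:E)%E.
  rewrite /fubini_F; transitivity (\int[LX']_y ((f x)%:E * (g y)%:E))%E.
    by apply: eq_integral => y _; rewrite /h /= EFinM.
  exact: integralZl.
under eq_integral => x _ do rewrite inner.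
have cfin := integrable_fin_num measurableT gint.
rewrite -(fineK cfin) integralZr // fineK //.
rewrite (integral_distribution (X := [the {mfun O >-> T} of X])); last 2 first.
  exact/measurable_EFinP.
  apply: (bm_integrable PT) => //; first exact: measurableT_comp.
  by exists M => x; exact: HM.
rewrite (integral_distribution (X := [the {mfun O >-> T} of X'])) //.
  exact/measurable_EFinP.
apply: (bm_integrable PT) => //; first exact: measurableT_comp.
by exists N => x; exact: HN.
Qed.

End indep.

Lemma le_integral_nm d (T : measurableType d) (R : realType)
  (mu : {measure set T -> \bar R}) (f g : T -> \bar R) :
  (forall x, 0 <= f x)%E -> (forall x, f x <= g x)%E ->
  (\int[mu]_x f x <= \int[mu]_x g x)%E.
Proof.
move=> f0 fg.
have g0 x : (0 <= g x)%E by exact: le_trans (f0 x) (fg x).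
rewrite !ge0_integralTE //.
apply: ge_ereal_sup => _ [h hf <-]; apply: ereal_sup_ubound; exists h => //.
by move=> x; exact: le_trans (hf x) (fg x).
Qed.

Lemma cos_sub_ineq (R : realType) (a b : R) :
  1 - cos (a - b) <= 2 * (1 - cos a) + 2 * (1 - cos b).
Proof.
rewrite cosB -subr_ge0.
have Ea := cos2Dsin2 a; have Eb := cos2Dsin2 b.
have -> : 2 * (1 - cos a) + 2 * (1 - cos b) - (1 - (cos a * cos b + sin a * sin b)) =
  ((sin a + sin b) ^+ 2 + (cos a + cos b - 2) ^+ 2) / 2 +
  ((1 - (cos a ^+ 2 + sin a ^+ 2)) + (1 - (cos b ^+ 2 + sin b ^+ 2))) / 2.
  by field.
rewrite Ea Eb !subrr addr0 mul0r addr0.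
by rewrite divr_ge0 // addr_ge0 // sqr_ge0.
Qed.

Ltac bmfs := repeat first [ assumption | apply: bmf_cst | apply: bmfB | apply: bmfD | apply: bmfN | apply: bmfM ].

Lemma Elin6 (dO : measure_display) (O : measurableType dO) (R : realType)
  (P : probability O R) (J f1 f2 f3 f4 : O -> R) (k0 k1 k2 k3 k4 : R) :
  bmf J -> bmf f1 -> bmf f2 -> bmf f3 -> bmf f4 ->
  Rintegral P setT (fun w => J w + (k0 + (k1 * f1 w + (k2 * f2 w + (k3 * f3 w + k4 * f4 w))))) =
  Rintegral P setT J + (k0 + (k1 * Rintegral P setT f1 + (k2 * Rintegral P setT f2 +
    (k3 * Rintegral P setT f3 + k4 * Rintegral P setT f4)))).
Proof.
move=> bJ b1 b2 b3 b4.
rewrite ED; [|by bmfs|by bmfs].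
rewrite ED; [|by bmfs|by bmfs].
rewrite Ecst ED; [|by bmfs|by bmfs].
rewrite ED; [|by bmfs|by bmfs].
rewrite ED; [|by bmfs|by bmfs].
by rewrite !EZ.
Qed.

Section gapbound.
Variables (dO : measure_display) (O : measurableType dO) (R : realType)
  (P : probability O R) (m n : nat)
  (X : O -> m.-tuple R) (Y : O -> n.-tuple R)
  (mX : measurable_fun setT X) (mY : measurable_fun setT Y).

Local Notation E f := (Rintegral P setT f).

Lemma gap_bound s t : cf_gap2 P X Y s t <=
  (1 - cf_re P X s ^+ 2 - cf_im P X s ^+ 2) * (1 - cf_re P Y t ^+ 2 - cf_im P Y t ^+ 2).
Proof.
have msX : measurable_fun setT (fun w => vdot s (X w)).
  by apply: measurable_vdot => //; exact: measurable_cst.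
have mtY : measurable_fun setT (fun w => vdot t (Y w)).
  by apply: measurable_vdot => //; exact: measurable_cst.
set cX := fun w => cos (vdot s (X w)).
set sX := fun w => sin (vdot s (X w)).
set cY := fun w => cos (vdot t (Y w)).
set sY := fun w => sin (vdot t (Y w)).
have bcX : bmf cX by exact: bmf_cos.
have bsX : bmf sX by exact: bmf_sin.
have bcY : bmf cY by exact: bmf_cos.
have bsY : bmf sY by exact: bmf_sin.
have bk (k : R) : bmf (fun _ : O => k) by exact: bmf_cst.
rewrite /cf_gap2 /=.
set a := cf_re P X s; set b := cf_im P X s; set c := cf_re P Y t; set e := cf_im P Y t.
have Ea : E cX = a by [].
have Eb : E sX = b by [].
have Ec : E cY = c by [].
have Ee : E sY = e by [].
have H := @CS2 _ _ _ P (fun w => cX w - a) (fun w => sX w - b)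
  (fun w => cY w - c) (fun w => sY w - e)
  (bmfB bcX (bk _)) (bmfB bsX (bk _)) (bmfB bcY (bk _)) (bmfB bsY (bk _)).
have EU : forall (cc ss : O -> R) (aa bb : R), bmf cc -> bmf ss ->
    (forall w, cc w ^+ 2 + ss w ^+ 2 = 1) -> E cc = aa -> E ss = bb ->
    E (fun w => (cc w - aa) ^+ 2 + (ss w - bb) ^+ 2) = 1 - aa ^+ 2 - bb ^+ 2.
  move=> cc ss aa bb bc bs one Ecc Ess.
  transitivity (E (fun w => (1 + aa ^+ 2 + bb ^+ 2) + ((- (2 * aa)) * cc w + (- (2 * bb)) * ss w))).
    apply: eq_Rintegral => w _.
    rewrite (_ : 1 + aa ^+ 2 + bb ^+ 2 = (cc w ^+ 2 + ss w ^+ 2) + aa ^+ 2 + bb ^+ 2); first ring.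
    by rewrite one.
  rewrite ED // ?Ecst; last by apply: bmfD; apply: bmfM.
  rewrite ED; [|by bmfs|by bmfs].
  by rewrite !EZ // Ecc Ess; ring.
rewrite (EU cX sX a b) // in H; last by move=> w; exact: cos2Dsin2.
rewrite (EU cY sY c e) // in H; last by move=> w; exact: cos2Dsin2.
have EJ1 : jcf_re P X Y s t = E (fun w => cX w * cY w - sX w * sY w).
  by apply: eq_Rintegral => w _; rewrite cosD.
have EJ2 : jcf_im P X Y s t = E (fun w => cX w * sY w + sX w * cY w).
  by apply: eq_Rintegral => w _; rewrite sinD addrC.
have bJ1 : bmf (fun w => cX w * cY w - sX w * sY w).
  by apply: bmfB; apply: bmfM.
have bJ2 : bmf (fun w => cX w * sY w + sX w * cY w).
  by apply: bmfD; apply: bmfM.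
have W1 : E (fun w => (cX w - a) * (cY w - c) - (sX w - b) * (sY w - e)) =
    jcf_re P X Y s t - (a * c - b * e).
  rewrite EJ1.
  transitivity (E (fun w => (cX w * cY w - sX w * sY w) +
     ((a * c - b * e) + ((- c) * cX w + ((- a) * cY w + (e * sX w + b * sY w)))))).
    by apply: eq_Rintegral => w _; ring.
  by rewrite Elin6 // Ea Eb Ec Ee; ring.
have W2 : E (fun w => (cX w - a) * (sY w - e) + (sX w - b) * (cY w - c)) =
    jcf_im P X Y s t - (a * e + b * c).
  rewrite EJ2.
  transitivity (E (fun w => (cX w * sY w + sX w * cY w) +
     ((a * e + b * c) + ((- e) * cX w + ((- a) * sY w + ((- c) * sX w + (- b) * cY w)))))).
    by apply: eq_Rintegral => w _; ring.
  by rewrite Elin6 // Ea Eb Ec Ee; ring.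
by rewrite W1 W2 in H.
Qed.
End gapbound.

Section onevar.
Variables (dO : measure_display) (O : measurableType dO) (R : realType)
  (P : probability O R) (m : nat) (X X' : O -> m.-tuple R)
  (mX : measurable_fun setT X) (mX' : measurable_fun setT X')
  (iX : indep2 P X X') (lX : same_law P X X')
  (mu : {measure set (m.-tuple R) -> \bar R}) (hmu : sym_levy_full mu).

Local Notation T := (m.-tuple R).
Local Notation E f := (Rintegral P setT f).

Definition muS : set T -> \bar R := mu.
HB.instance Definition _ := Measure.on muS.
HB.instance Definition _ := Measure_isSigmaFinite.Build _ _ _ muS (levy_sigma_finite hmu).

Definition gfun (s : T) : R := 1 - cf_re P X s ^+ 2 - cf_im P X s ^+ 2.

Let kf : O * T -> \bar R :=
  fun p => (1 - cos (vdot (X p.1) p.2 - vdot (X' p.1) p.2))%:E.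

Let mkf : measurable_fun setT kf.
Proof.
apply/measurable_EFinP; apply: measurable_funB; first exact: measurable_cst.
apply: (measurableT_comp (continuous_measurable_fun (@continuous_cos R))).
apply: measurable_funB.
- exact: (measurable_vdot (f := fun p : O * T => X p.1) (g := snd)
    (measurableT_comp mX measurable_fst) measurable_snd).
- exact: (measurable_vdot (f := fun p : O * T => X' p.1) (g := snd)
    (measurableT_comp mX' measurable_fst) measurable_snd).
Qed.

Let kf0 p : (0 <= kf p)%E.
Proof. by rewrite lee_fin subr_ge0 cos_le1. Qed.

Lemma G_eq s : (\int[P]_w kf (w, s))%E = (gfun s)%:E.
Proof.
have mvs : measurable_fun setT (fun x : T => vdot s x).
  by apply: measurable_vdot => //; exact: measurable_cst.
have mc : measurable_fun setT (fun x : T => cos (vdot s x)).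
  exact: (measurableT_comp (continuous_measurable_fun (@continuous_cos R)) mvs).
have ms : measurable_fun setT (fun x : T => sin (vdot s x)).
  exact: (measurableT_comp (continuous_measurable_fun (@continuous_sin R)) mvs).
have bc : exists M : R, forall x : T, `|cos (vdot s x)| <= M.
  by exists 1 => x; rewrite ler_norml cos_le1 cos_geN1.
have bs : exists M : R, forall x : T, `|sin (vdot s x)| <= M.
  by exists 1 => x; rewrite ler_norml sin_le1 sin_geN1.
have msX : measurable_fun setT (fun w => vdot s (X w)).
  by apply: measurable_vdot => //; exact: measurable_cst.
have msX' : measurable_fun setT (fun w => vdot s (X' w)).
  by apply: measurable_vdot => //; exact: measurable_cst.
have bcX := bmf_cos msX; have bsX := bmf_sin msX.
have bcX' := bmf_cos msX'; have bsX' := bmf_sin msX'.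
transitivity (\int[P]_w (1 - (cos (vdot s (X w)) * cos (vdot s (X' w)) +
    sin (vdot s (X w)) * sin (vdot s (X' w))))%:E)%E.
  by apply: eq_integral => w _; rewrite /kf /= (vdotC (X w)) (vdotC (X' w)) cosB.
rewrite E_EFin; last by bmfs.
congr EFin.
have prod (f : T -> R) : measurable_fun setT f -> (exists M : R, forall x, `|f x| <= M) ->
    bmf (fun w => f (X w)) ->
    E (fun w => f (X w) * f (X' w)) = E (fun w => f (X w)) ^+ 2.
  move=> mf bf bfX.
  rewrite /Rintegral (indep_mul mX mX' iX mf mf bf bf) (law_eq mX mX' lX mf bf).
  by rewrite (E_EFin P bfX) -EFinM /= expr2.
rewrite EB; [|by bmfs|by bmfs].
rewrite ED; [|by bmfs|by bmfs].
by rewrite Ecst (prod _ mc bc bcX) (prod _ ms bs bsX) /gfun opprD addrA.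
Qed.

Lemma G_meas : measurable_fun setT (fun s => (gfun s)%:E).
Proof.
rewrite (_ : (fun s => _) = fubini_G P kf).
  exact: (measurable_fun_fubini_tonelli_G kf mkf kf0).
by apply/funext => s; rewrite /fubini_G G_eq.
Qed.

Lemma gfun_ge0 s : 0 <= gfun s.
Proof. by rewrite -lee_fin -G_eq; apply: integral_ge0 => w _; exact: kf0. Qed.

Lemma G_int : (\int[mu]_s (gfun s)%:E = \int[P]_w levy_phi mu (vsub (X w) (X' w)))%E.
Proof.
transitivity (\int[muS]_s \int[P]_w kf (w, s))%E.
  by apply: eq_integral => s _; rewrite G_eq.
rewrite -(fubini_tonelli kf mkf kf0).
apply: eq_integral => w _; rewrite /levy_phi.
by apply: eq_integral => s _; rewrite /kf /= vdot_subl.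
Qed.

Let k2 : T * T -> \bar R := fun p => (1 - cos (vdot p.1 p.2))%:E.

Lemma phi_meas : measurable_fun setT (levy_phi mu).
Proof.
have mk2 : measurable_fun setT k2.
  apply/measurable_EFinP; apply: measurable_funB; first exact: measurable_cst.
  apply: (measurableT_comp (continuous_measurable_fun (@continuous_cos R))).
  by apply: measurable_vdot; [exact: measurable_fst|exact: measurable_snd].
have k20 p : (0 <= k2 p)%E by rewrite lee_fin subr_ge0 cos_le1.
exact: (measurable_fun_fubini_tonelli_F (m2 := muS) k2 mk2 k20).
Qed.

Lemma phi_ge0 x : (0 <= levy_phi mu x)%E.
Proof. by apply: integral_ge0 => s _; rewrite lee_fin subr_ge0 cos_le1. Qed.

Lemma phi_sub x y :
  (levy_phi mu (vsub x y) <= 2%:E * levy_phi mu x + 2%:E * levy_phi mu y)%E.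
Proof.
have mc (z : T) : measurable_fun setT (fun s : T => (1 - cos (vdot z s))%:E).
  apply/measurable_EFinP; apply: measurable_funB; first exact: measurable_cst.
  apply: (measurableT_comp (continuous_measurable_fun (@continuous_cos R))).
  by apply: measurable_vdot => //; exact: measurable_cst.
have c0 (z : T) s : (0 <= (1 - cos (vdot z s))%:E)%E by rewrite lee_fin subr_ge0 cos_le1.
rewrite /levy_phi -!ge0_integralZl_EFin //.
rewrite -ge0_integralD //.
all: try (by move=> s _; rewrite mule_ge0).
all: try exact: measurable_funeM.
apply: ge0_le_integral => //.
- apply: emeasurable_funD; exact: measurable_funeM.
- move=> s _; rewrite -!EFinM -EFinD lee_fin vdot_subl.
  exact: cos_sub_ineq.
Qed.

Lemma part2 : (\int[P]_w levy_phi mu (vsub (X w) (X' w)) <=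
  4%:E * \int[P]_w levy_phi mu (X w))%E.
Proof.
have mpX : measurable_fun setT (fun w => levy_phi mu (X w)).
  exact: measurableT_comp phi_meas mX.
have mpX' : measurable_fun setT (fun w => levy_phi mu (X' w)).
  exact: measurableT_comp phi_meas mX'.
have H1 := @le_integral_nm _ _ _ P (fun w => levy_phi mu (vsub (X w) (X' w)))
  (fun w => 2%:E * levy_phi mu (X w) + 2%:E * levy_phi mu (X' w))%E
  (fun w => phi_ge0 _) (fun w => phi_sub _ _).
apply: (le_trans H1).
rewrite ge0_integralD //.
all: try (by move=> w _; rewrite mule_ge0 // phi_ge0).
all: try exact: measurable_funeM.
rewrite !ge0_integralZl_EFin //.
all: try (by move=> w _; exact: phi_ge0).
have -> : (\int[P]_w levy_phi mu (X' w) = \int[P]_w levy_phi mu (X w))%E.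
  exact: (law_eq_ge0 mX mX' lX phi_meas phi_ge0).
rewrite -ge0_muleDl // -EFinD.
by have -> : (2 + 2 : R) = 4 by lra.
Qed.

End onevar.
Unset Implicit Arguments.
Local Open Scope ereal_scope.

Theorem lemma3p6 (dO : measure_display) (O : measurableType dO) (R : realType)
  (P : probability O R) (m n : nat)
  (X X' : O -> m.-tuple R) (Y Y' : O -> n.-tuple R)
  (mX : measurable_fun setT X) (mX' : measurable_fun setT X')
  (mY : measurable_fun setT Y) (mY' : measurable_fun setT Y')
  (iX : indep2 P X X') (lX : same_law P X X')
  (iY : indep2 P Y Y') (lY : same_law P Y Y')
  (mu : {measure set (m.-tuple R) -> \bar R})
  (nu : {measure set (n.-tuple R) -> \bar R})
  (hmu : sym_levy_full mu) (hnu : sym_levy_full nu) :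
  dcov2 P mu nu X Y <=
    (\int[P]_w levy_phi mu (vsub (X w) (X' w))) *
    (\int[P]_w levy_phi nu (vsub (Y w) (Y' w)))
  /\
  (\int[P]_w levy_phi mu (vsub (X w) (X' w))) *
    (\int[P]_w levy_phi nu (vsub (Y w) (Y' w)))
  <= 16%:E * ((\int[P]_w levy_phi mu (X w)) * (\int[P]_w levy_phi nu (Y w))).
Proof.
split.
  rewrite /dcov2.
  have gap0 s t : (0 <= cf_gap2 P X Y s t)%R.
    by rewrite /cf_gap2 /= addr_ge0 // sqr_ge0.
  have gap0E s t : 0 <= (cf_gap2 P X Y s t)%:E by rewrite lee_fin.
  have gapb s t : (cf_gap2 P X Y s t)%:E <= (gfun P X s * gfun P Y t)%:E.
    by rewrite lee_fin; exact: (@gap_bound _ _ _ P _ _ X Y mX mY s t).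
  have step1 := @le_integral_nm _ _ _ mu
    (fun s => \int[nu]_t (cf_gap2 P X Y s t)%:E)
    (fun s => \int[nu]_t (gfun P X s * gfun P Y t)%:E)
    (fun s => integral_ge0 _ (fun t _ => gap0E s t))
    (fun s => le_integral_nm _ (fun t => gap0E s t) (fun t => gapb s t)).
  apply: (le_trans step1).
  have inner s : \int[nu]_t (gfun P X s * gfun P Y t)%:E =
      (gfun P X s)%:E * \int[nu]_t (gfun P Y t)%:E.
    under eq_integral do rewrite EFinM.
    apply: ge0_integralZl_EFin => //.
    - by move=> t _; rewrite lee_fin (gfun_ge0 mY mY' iY lY).
    - exact: (G_meas mY mY' iY lY).
    - exact: (gfun_ge0 mX mX' iX lX).
  under eq_integral => s _ do rewrite inner.
  rewrite ge0_integralZr //.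
  - by rewrite (G_int mX mX' iX lX hmu) (G_int mY mY' iY lY hnu).
  - exact: (G_meas mX mX' iX lX).
  - by move=> s _; rewrite lee_fin (gfun_ge0 mX mX' iX lX).
  - by apply: integral_ge0 => t _; rewrite lee_fin (gfun_ge0 mY mY' iY lY).
have hX := part2 mX mX' lX hmu.
have hY := part2 mY mY' lY hnu.
apply: le_trans (lee_pmul _ _ hX hY) _.
- by apply: integral_ge0 => w _; exact: phi_ge0.
- by apply: integral_ge0 => w _; exact: phi_ge0.
rewrite muleACA -EFinM.
by have -> : (4 * 4 : R)%R = 16%R by lra.
Qed.
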